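(* Finite pseudo-orthomodular posets are precisely the complement-closed and doubly dense subsets of finite orthomodular lattices. That is: (a) every finite pseudo-orthomodular poset is isomorphic (as a poset with complementation) to a complement-closed and doubly dense subset of some finite orthomodular lattice, with the induced order and complementation; and (b) if $X$ is a complement-closed and doubly dense subset of a finite orthomodular lattice, then $X$ with the induced order and complementation is a (finite) pseudo-orthomodular poset.
   Context: For a poset and $M$ a subset, $U(M)$, $L(M)$ denote the sets of upper and lower bounds; $U(a,b)=U(\{a,b\})$ etc. A poset with complementation is a bounded poset $(P,\le,{}',0,1)$ with antitone involution $'$ ($x\le y\Rightarrow y'\le x'$, $x''=x$) such that $L(x,x')=\{0\}$, $U(x,x')=\{1\}$; it is pseudo-orthomodular if $L(U(L(x,y),y'),y)=L(x,y)$ for all $x,y$. A lattice with complementation is orthomodular if $x\vee y=((x\vee y)\wedge y')\vee y$ for all $x,y$. For a poset with complementation $\mathbf Q=(Q,\le,{}',0,1)$, a subset $X\subseteq Q$ is complement-closed and doubly dense in $\mathbf Q$ if: for every $a\in Q$, $a=\bigvee_{\mathbf Q}(L(a)\cap X)=\bigwedge_{\mathbf Q}(U(a)\cap X)$; $x\in X$ implies $x'\in X$; and $0,1\in X$. *)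

(* Defs.v *)
From mathcomp Require Import all_boot.
Set Implicit Arguments. Unset Strict Implicit. Unset Printing Implicit Defensive.

Section Defs.
Variables (T : finType) (D : {set T}) (le : rel T).

Definition Ub (M : {set T}) : {set T} := [set x in D | [forall m in M, le m x]].
Definition Lb (M : {set T}) : {set T} := [set x in D | [forall m in M, le x m]].

Definition is_sup (M : {set T}) (a : T) : Prop :=
  a \in Ub M /\ forall u, u \in Ub M -> le a u.
Definition is_inf (M : {set T}) (a : T) : Prop :=
  a \in Lb M /\ forall u, u \in Lb M -> le u a.

Definition poset_compl (c : T -> T) (z o : T) : Prop :=
  [/\ {in D, forall x, le x x},
      {in D &, forall x y, le x y -> le y x -> x = y},
      {in D & &, forall x y w, le x y -> le y w -> le x w},
      (z \in D /\ o \in D /\ {in D, forall x, le z x && le x o}) &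
      [/\ {in D, forall x, c x \in D},
          {in D &, forall x y, le x y -> le (c y) (c x)},
          {in D, forall x, c (c x) = x},
          {in D, forall x, Lb [set x; c x] = [set z]} &
          {in D, forall x, Ub [set x; c x] = [set o]}]].

Definition pseudo_orthomodular (c : T -> T) (z o : T) : Prop :=
  poset_compl c z o /\
  {in D &, forall x y,
     Lb (Ub (Lb [set x; y] :|: [set c y]) :|: [set y]) = Lb [set x; y]}.

Definition is_lattice : Prop :=
  {in D &, forall x y, (exists j, is_sup [set x; y] j) /\ (exists m, is_inf [set x; y] m)}.

Definition orthomodular_lattice (c : T -> T) (z o : T) : Prop :=
  [/\ poset_compl c z o, is_lattice &
      {in D &, forall x y j m k,
         is_sup [set x; y] j -> is_inf [set j; c y] m -> is_sup [set m; y] k -> j = k}].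

Definition cc_doubly_dense (c : T -> T) (z o : T) (X : {set T}) : Prop :=
  [/\ X \subset D,
      {in D, forall a, (is_sup (Lb [set a] :&: X) a /\ is_inf (Ub [set a] :&: X) a)},
      {in X, forall x, c x \in X} &
      (z \in X /\ o \in X)].
End Defs.

(* Main.v *)
Require Import Defs.
From mathcomp Require Import all_boot.
Set Implicit Arguments. Unset Strict Implicit. Unset Printing Implicit Defensive.

Section OLS.
Variables (T : finType) (le : rel T) (mt jn : T -> T -> T) (cp : T -> T) (z o : T).
Hypothesis leRR : forall x, le x x.
Hypothesis leA : forall x y, le x y -> le y x -> x = y.
Hypothesis leTr : forall x y w, le x y -> le y w -> le x w.
Hypothesis mtl : forall x y, le (mt x y) x.
Hypothesis mtr : forall x y, le (mt x y) y.
Hypothesis mtg : forall w x y, le w x -> le w y -> le w (mt x y).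
Hypothesis jnl : forall x y, le x (jn x y).
Hypothesis jnr : forall x y, le y (jn x y).
Hypothesis jng : forall x y w, le x w -> le y w -> le (jn x y) w.
Hypothesis zle : forall x, le z x.
Hypothesis leo : forall x, le x o.
Hypothesis cpA : forall x y, le x y -> le (cp y) (cp x).
Hypothesis cpK : forall x, cp (cp x) = x.
Hypothesis cpz : forall x, le (mt x (cp x)) z.

Lemma le_cp x y : le (cp x) (cp y) = le y x.
Proof. apply/idP/idP => [H|]; last exact: cpA. by rewrite -(cpK x) -(cpK y); apply: cpA. Qed.

Lemma mtC x y : mt x y = mt y x.
Proof. by apply: leA; apply: mtg. Qed.
Lemma jnC x y : jn x y = jn y x.
Proof. by apply: leA; apply: jng. Qed.
Lemma mtS x y x' y' : le x x' -> le y y' -> le (mt x y) (mt x' y').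
Proof. move=> h1 h2; apply: mtg; [exact: leTr (mtl _ _) h1| exact: leTr (mtr _ _) h2]. Qed.
Lemma jnS x y x' y' : le x x' -> le y y' -> le (jn x y) (jn x' y').
Proof. move=> h1 h2; apply: jng; [exact: leTr h1 (jnl _ _)| exact: leTr h2 (jnr _ _)]. Qed.
Lemma mtA x y w : mt x (mt y w) = mt (mt x y) w.
Proof.
apply: leA.
  apply: mtg; first apply: mtS => //; exact: leTr (mtr _ _) (mtr _ _).
apply: mtg; first exact: leTr (mtl _ _) (mtl _ _).
apply: mtS => //.
Qed.
Lemma jnA x y w : jn x (jn y w) = jn (jn x y) w.
Proof.
apply: leA.
  apply: jng; first exact: leTr (jnl _ _) (jnl _ _).
  apply: jnS => //.
apply: jng; first apply: jnS => //; exact: leTr (jnr _ _) (jnr _ _).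
Qed.
Lemma cp_jn x y : cp (jn x y) = mt (cp x) (cp y).
Proof.
apply: leA; first by apply: mtg; apply: cpA.
rewrite -[mt (cp x) (cp y)]cpK le_cp; apply: jng; rewrite -le_cp cpK //.
Qed.
Lemma cp_mt x y : cp (mt x y) = jn (cp x) (cp y).
Proof. by rewrite -{1}(cpK x) -{1}(cpK y) -cp_jn cpK. Qed.
Lemma le_z x : le x z -> x = z.
Proof. by move=> h; apply: leA. Qed.
Lemma cpo : cp o = z.
Proof. by apply: le_z; rewrite -le_cp cpK. Qed.
Lemma cpz' : cp z = o.
Proof. by rewrite -cpo cpK. Qed.
Lemma mto x : mt o x = x.
Proof. by apply: leA => //; apply: mtg. Qed.
Lemma jnz x : jn z x = x.
Proof. by apply: leA => //; apply: jng. Qed.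
Lemma mt_id x y : le x y -> mt x y = x.
Proof. by move=> h; apply: leA => //; apply: mtg. Qed.
Lemma jn_id x y : le x y -> jn x y = y.
Proof. by move=> h; apply: leA => //; apply: jng. Qed.

Definition F1g q r := forall C, le C r -> mt r (jn (mt q (cp r)) C) = C.
Definition F2g q r := forall D, le r D -> le D q -> jn r (mt (cp r) D) = D.

Lemma noO6_ind n q : #|[pred x | le x q]| <= n ->
  (forall x, le x q -> mt q (jn (cp q) x) = x) ->
  (forall x, le x q -> x != z -> exists r, [/\ le r x, r != z, F1g q r & F2g q r]) ->
  forall E D, le E D -> le D q -> mt (cp E) D = z -> E = D.
Proof.
elim: n q => [|n IH] q.
  rewrite leqn0 => /eqP/card0_eq/(_ q); by rewrite inE leRR.
move=> Hc F1q Dens E D hED hDq hO.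
pose h x := mt q (cp x).
have hh x : le x q -> h (h x) = x.
  by move=> hx; rewrite /h cp_mt cpK F1q.
have hA x y : le x y -> le (h y) (h x).
  by move=> hxy; apply: mtS => //; apply: cpA.
have hq x : le (h x) q by exact: mtl.
have hz : h z = q by rewrite /h cpz' mtC mto.
have hqz : h q = z by apply: le_z; apply: cpz.
have hEq : le E q by exact: leTr hED hDq.
case: (eqVneq D q) => [eDq|nDq].
  subst D.
  have : h E = z by rewrite /h mtC.
  by move=> e; rewrite -(hh E hEq) e hz.
have hDz : h D != z.
  by apply/eqP => e; move: nDq; rewrite -(hh D hDq) e hz eqxx.
have [r [hr1 hr2 G1 G2]] := Dens (h D) (hq D) hDz.
pose t := h r.
have hrq : le r q by exact: leTr hr1 (hq D).
have hDt : le D t by rewrite -(hh D hDq); apply: hA.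
have htq : le t q by exact: hq.
have ntq : t != q.
  by apply/eqP => e; move: hr2; rewrite -(hh r hrq) -/t e hqz eqxx.
apply: (IH t) => //.
- rewrite -ltnS; apply: leq_trans Hc; apply: proper_card.
  apply/properP; split.
    by apply/subsetP => x; rewrite !inE => hx; apply: leTr hx htq.
  exists q; first by rewrite inE leRR.
  by rewrite inE; apply/negP => hqt; move: ntq; rewrite (leA htq hqt) eqxx.
- move=> y hy.
  have hyq : le y q by exact: leTr hy htq.
  have rhy : le r (h y) by rewrite -(hh r hrq) -/t; apply: hA.
  have e := G2 (h y) rhy (hq y).
  have e2 : y = mt q (mt (cp r) (jn r (jn (cp q) y))).
    by rewrite -{1}(hh y hyq) -e /h cp_jn cp_mt cpK cp_mt cpK.
  rewrite /t /h cp_mt cpK [in RHS]e2 mtA jnA (jnC r) //.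
- move=> x hx nx.
  have [r2 [a1 a2 a3 a4]] := Dens x (leTr hx htq) nx.
  exists r2; split => //.
    move=> C hC; apply: leA; last first.
      by apply: mtg => //; exact: jnr.
    rewrite -{2}(a3 C hC); apply: mtS => //; apply: jnS => //; apply: mtS => //.
  by move=> D0 h1 h2; apply: a4 => //; exact: leTr h2 htq.
Qed.

Theorem noO6 :
  (forall x, x != z -> exists r, [/\ le r x, r != z, F1g o r & F2g o r]) ->
  forall E D, le E D -> mt (cp E) D = z -> E = D.
Proof.
move=> Dens E D h1 h2; apply: (@noO6_ind #|[pred x | le x o]| o) => //.
  by move=> x _; rewrite cpo jnz mto.
by move=> x _ nx; apply: Dens.
Qed.

Theorem OMlaw :
  (forall x, x != z -> exists r, [/\ le r x, r != z, F1g o r & F2g o r]) ->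
  forall x y, jn (mt (jn x y) (cp y)) y = jn x y.
Proof.
move=> Dens x y; set j := jn x y; set k := jn (mt j (cp y)) y.
apply: (noO6 Dens); first by apply: jng => //; rewrite /j.
apply: le_z.
have h1 : le (mt (cp k) j) k.
  apply: leTr (jnl _ y); rewrite mtC; apply: mtS => //; apply: cpA; exact: jnr.
apply: leTr (cpz k); apply: mtg => //.
Qed.

Definition F1s r := forall C, le C r -> mt r (jn (cp r) C) = C.

Lemma F1s_g r : F1s r -> F1g o r.
Proof. by move=> h C hC; rewrite mto; apply: h. Qed.

Lemma F1s_F2 r : F1s (cp r) -> F2g o r.
Proof.
move=> h D hD _.
have e := h (cp D) (cpA hD); rewrite cpK in e.
by rewrite -{2}(cpK D) -e cp_mt cp_jn cpK cpK.
Qed.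

Lemma inUb2 a b u : (u \in Ub [set: T] le [set a; b]) = le a u && le b u.
Proof.
rewrite inE in_setT /=; apply/forall_inP/andP => [h|[h1 h2] m].
  by split; apply: h; rewrite !inE eqxx ?orbT.
by rewrite !inE => /orP[]/eqP->.
Qed.
Lemma inLb2 a b u : (u \in Lb [set: T] le [set a; b]) = le u a && le u b.
Proof.
rewrite inE in_setT /=; apply/forall_inP/andP => [h|[h1 h2] m].
  by split; apply: h; rewrite !inE eqxx ?orbT.
by rewrite !inE => /orP[]/eqP->.
Qed.
Lemma sup_jn a b : is_sup [set: T] le [set a; b] (jn a b).
Proof. split; first by rewrite inUb2 jnl jnr. by move=> u; rewrite inUb2 => /andP[]; apply: jng. Qed.
Lemma inf_mt a b : is_inf [set: T] le [set a; b] (mt a b).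
Proof. split; first by rewrite inLb2 mtl mtr. by move=> u; rewrite inLb2 => /andP[]; apply: mtg. Qed.
Lemma sup_uniq M a b : is_sup [set: T] le M a -> is_sup [set: T] le M b -> a = b.
Proof. by move=> [h1 h2] [h3 h4]; apply: leA; [apply: h2|apply: h4]. Qed.
Lemma inf_uniq M a b : is_inf [set: T] le M a -> is_inf [set: T] le M b -> a = b.
Proof. by move=> [h1 h2] [h3 h4]; apply: leA; [apply: h4|apply: h2]. Qed.

Lemma Lb_cp x : Lb [set: T] le [set x; cp x] = [set z].
Proof.
apply/setP => w; rewrite inLb2 inE; apply/andP/eqP => [[h1 h2]|->]; last by rewrite !zle.
by apply: le_z; apply: leTr (cpz x); exact: mtg.
Qed.
Lemma Ub_cp x : Ub [set: T] le [set x; cp x] = [set o].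
Proof.
apply/setP => w; rewrite inUb2 inE; apply/andP/eqP => [[h1 h2]|->]; last by rewrite !leo.
rewrite -(cpK w) -cpz'; congr cp; apply: le_z; apply: leTr (cpz x); apply: mtg.
  by rewrite -le_cp cpK.
exact: cpA.
Qed.

Theorem OML_of :
  (forall x, x != z -> exists r, [/\ le r x, r != z, F1s r & F1s (cp r)]) ->
  orthomodular_lattice [set: T] le cp z o.
Proof.
move=> Dens.
have Dens' : forall x, x != z -> exists r, [/\ le r x, r != z, F1g o r & F2g o r].
  move=> x nx; have [r [h1 h2 h3 h4]] := Dens x nx.
  by exists r; split => //; [apply: F1s_g | apply: F1s_F2].
split.
- split => //.
  + by move=> x y _ _; apply: leA.
  + by move=> x y w _ _ _; apply: leTr.
  + by split; rewrite ?in_setT //; split => // x _; rewrite zle leo.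
  + split => //.
    * by move=> x y _ _; apply: cpA.
    * by move=> x _; apply: Lb_cp.
    * by move=> x _; apply: Ub_cp.
- by move=> x y _ _; split; [exists (jn x y); apply: sup_jn | exists (mt x y); apply: inf_mt].
- move=> x y _ _ j m k hj hm hk.
  have ej := sup_uniq hj (sup_jn x y); subst j.
  have em := inf_uniq hm (inf_mt _ _); subst m.
  by rewrite (sup_uniq hk (sup_jn _ _)) OMlaw.
Qed.
End OLS.

Section DMS.
Variables (P : finType) (le : rel P) (c : P -> P) (z o : P).
Hypothesis H : pseudo_orthomodular [set: P] le c z o.

Notation L := (Lb [set: P] le).
Notation U := (Ub [set: P] le).

Lemma leRR x : le x x.
Proof. by case: H => [[h _ _ _ _] _]; apply: h; rewrite in_setT. Qed.
Lemma leA x y : le x y -> le y x -> x = y.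
Proof. by case: H => [[_ h _ _ _] _]; apply: h; rewrite in_setT. Qed.
Lemma leTr x y w : le x y -> le y w -> le x w.
Proof. by case: H => [[_ _ h _ _] _]; apply: h; rewrite in_setT. Qed.
Lemma zle x : le z x.
Proof. by case: H => [[_ _ _ [_ [_ h]] _] _]; case/andP: (h x (in_setT x)). Qed.
Lemma leo x : le x o.
Proof. by case: H => [[_ _ _ [_ [_ h]] _] _]; case/andP: (h x (in_setT x)). Qed.
Lemma cA x y : le x y -> le (c y) (c x).
Proof. by case: H => [[_ _ _ _ [_ h _ _ _]] _]; apply: h; rewrite in_setT. Qed.
Lemma cK x : c (c x) = x.
Proof. by case: H => [[_ _ _ _ [_ _ h _ _]] _]; apply: h; rewrite in_setT. Qed.
Lemma cLb x : L [set x; c x] = [set z].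
Proof. by case: H => [[_ _ _ _ [_ _ _ h _]] _]; apply: h; rewrite in_setT. Qed.
Lemma pOM x y : L (U (L [set x; y] :|: [set c y]) :|: [set y]) = L [set x; y].
Proof. by case: H => [_ h]; apply: h; rewrite in_setT. Qed.
Lemma le_c x y : le (c x) (c y) = le y x.
Proof. apply/idP/idP => [h|]; last exact: cA. by rewrite -(cK x) -(cK y); apply: cA. Qed.

Lemma inL (M : {set P}) x : (x \in L M) = [forall m in M, le x m].
Proof. by rewrite inE in_setT. Qed.
Lemma inU (M : {set P}) x : (x \in U M) = [forall m in M, le m x].
Proof. by rewrite inE in_setT. Qed.
Lemma LS (M N : {set P}) : M \subset N -> L N \subset L M.
Proof.
move=> /subsetP h; apply/subsetP => x; rewrite !inL => /forall_inP h2.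
by apply/forall_inP => m /h; apply: h2.
Qed.
Lemma US (M N : {set P}) : M \subset N -> U N \subset U M.
Proof.
move=> /subsetP h; apply/subsetP => x; rewrite !inU => /forall_inP h2.
by apply/forall_inP => m /h; apply: h2.
Qed.
Lemma subLU (M : {set P}) : M \subset L (U M).
Proof. by apply/subsetP => x hx; rewrite inL; apply/forall_inP => u; rewrite inU => /forall_inP; apply. Qed.
Lemma subUL (M : {set P}) : M \subset U (L M).
Proof. by apply/subsetP => x hx; rewrite inU; apply/forall_inP => u; rewrite inL => /forall_inP; apply. Qed.
Lemma LUL (M : {set P}) : L (U (L M)) = L M.
Proof. by apply/eqP; rewrite eqEsubset subLU andbT; apply: LS; apply: subUL. Qed.
Lemma LsetU (M N : {set P}) : L (M :|: N) = L M :&: L N.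
Proof.
apply/setP => x; rewrite in_setI !inL; apply/forall_inP/andP => [h|[/forall_inP h1 /forall_inP h2] m].
  by split; apply/forall_inP => m hm; apply: h; rewrite inE hm ?orbT.
by rewrite inE => /orP[]; [apply: h1|apply: h2].
Qed.
Lemma UsetU (M N : {set P}) : U (M :|: N) = U M :&: U N.
Proof.
apply/setP => x; rewrite in_setI !inU; apply/forall_inP/andP => [h|[/forall_inP h1 /forall_inP h2] m].
  by split; apply/forall_inP => m hm; apply: h; rewrite inE hm ?orbT.
by rewrite inE => /orP[]; [apply: h1|apply: h2].
Qed.
Lemma inL1 a x : (x \in L [set a]) = le x a.
Proof. rewrite inL; apply/forall_inP/idP => [h|h m]; first by apply: h; rewrite inE. by rewrite inE => /eqP->. Qed.
Lemma inU1 a x : (x \in U [set a]) = le a x.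
Proof. rewrite inU; apply/forall_inP/idP => [h|h m]; first by apply: h; rewrite inE. by rewrite inE => /eqP->. Qed.
Lemma UL1 a : U (L [set a]) = U [set a].
Proof.
apply/setP => x; rewrite inU1 inU; apply/forall_inP/idP => [h|h m].
  by apply: h; rewrite inL1 leRR.
by rewrite inL1 => hm; apply: leTr hm h.
Qed.
Lemma inLc (S : {set P}) x : (x \in L (c @: S)) = (c x \in U S).
Proof.
rewrite inL inU; apply/forall_inP/forall_inP => [h m hm|h m /imsetP[s hs ->]].
  by rewrite -le_c cK; apply: h; apply: imset_f.
by rewrite -le_c cK; apply: h.
Qed.
Lemma imLc (S : {set P}) : c @: L (c @: S) = U S.
Proof.
apply/setP => x; apply/imsetP/idP => [[y hy ->]|hx]; first by rewrite -inLc.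
by exists (c x); rewrite ?cK // inLc cK.
Qed.
Lemma Lc1 y : L (c @: L [set y]) = L [set c y].
Proof.
apply/setP => x; rewrite inLc UL1 inU1 inL1.
by rewrite -le_c cK.
Qed.

Definition closedb (A : {set P}) := L (U A) == A.
Definition Q := {A : {set P} | closedb A}.
Definition mkL (S : {set P}) : Q := exist _ (L S) (introT eqP (LUL S)).
Lemma closedQ (A : Q) : L (U (val A)) = val A.
Proof. exact: eqP (valP A). Qed.
Lemma down (A : Q) x y : le y x -> x \in val A -> y \in val A.
Proof.
move=> hyx hx; rewrite -closedQ inL; apply/forall_inP => u.
rewrite inU => /forall_inP h; exact: leTr hyx (h _ hx).
Qed.

Definition leQ : rel Q := fun A B => val A \subset val B.
Definition mtQ (A B : Q) : Q := mkL (U (val A) :|: U (val B)).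
Definition jnQ (A B : Q) : Q := mkL (U (val A :|: val B)).
Definition cpQ (A : Q) : Q := mkL (c @: val A).
Definition zQ : Q := mkL setT.
Definition oQ : Q := mkL set0.
Definition fQ (x : P) : Q := mkL [set x].

Lemma val_mt A B : val (mtQ A B) = val A :&: val B.
Proof. by rewrite /= LsetU !closedQ. Qed.

Lemma Q_leRR A : leQ A A. Proof. exact: subxx. Qed.
Lemma Q_leA A B : leQ A B -> leQ B A -> A = B.
Proof. by move=> h1 h2; apply: val_inj; apply/eqP; rewrite eqEsubset; apply/andP. Qed.
Lemma Q_leTr A B C : leQ A B -> leQ B C -> leQ A C.
Proof. exact: subset_trans. Qed.
Lemma Q_mtl A B : leQ (mtQ A B) A. Proof. by rewrite /leQ val_mt subsetIl. Qed.
Lemma Q_mtr A B : leQ (mtQ A B) B. Proof. by rewrite /leQ val_mt subsetIr. Qed.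
Lemma Q_mtg W A B : leQ W A -> leQ W B -> leQ W (mtQ A B).
Proof. by rewrite /leQ val_mt => h1 h2; rewrite subsetI h1 h2. Qed.
Lemma Q_jnl A B : leQ A (jnQ A B).
Proof. exact: subset_trans (subsetUl _ _) (subLU _). Qed.
Lemma Q_jnr A B : leQ B (jnQ A B).
Proof. exact: subset_trans (subsetUr _ _) (subLU _). Qed.
Lemma Q_jng A B W : leQ A W -> leQ B W -> leQ (jnQ A B) W.
Proof.
rewrite /leQ => h1 h2; rewrite -[val W]closedQ; apply: LS; apply: US.
by rewrite subUset h1 h2.
Qed.
Lemma Q_zle A : leQ zQ A.
Proof. by rewrite /leQ -[val A]closedQ; apply: LS; apply: subsetT. Qed.
Lemma Q_leo A : leQ A oQ.
Proof. by apply/subsetP => x _; rewrite inL; apply/forall_inP => m; rewrite inE. Qed.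
Lemma Q_cpA A B : leQ A B -> leQ (cpQ B) (cpQ A).
Proof. by move=> h; apply: LS; apply: imsetS. Qed.
Lemma Q_cpK A : cpQ (cpQ A) = A.
Proof. by apply: val_inj; rewrite /= imLc closedQ. Qed.
Lemma Q_cpz A : leQ (mtQ A (cpQ A)) zQ.
Proof.
rewrite /leQ val_mt; apply/subsetP => x; rewrite inE => /andP[h1 h2].
have : x \in L [set x; c x].
  rewrite LsetU inE !inL1 leRR /=.
  by move: h2; rewrite /= inL => /forall_inP; apply; apply: imset_f.
rewrite cLb inE => /eqP ->.
by rewrite /= inL; apply/forall_inP => m _; apply: zle.
Qed.

Lemma val_f x : val (fQ x) = L [set x].
Proof. by []. Qed.
Lemma cpQ_f y : cpQ (fQ y) = fQ (c y).
Proof. by apply: val_inj; rewrite /= Lc1. Qed.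

Lemma step1 x y :
  L [set y] :&: L (U (L [set c y] :|: (L [set x] :&: L [set y]))) = L [set x] :&: L [set y].
Proof.
have e := pOM x y.
rewrite !LsetU !UsetU UL1 in e *.
by rewrite [U [set c y] :&: _]setIC setIC e setIC.
Qed.

Lemma step2 (C : Q) y : val C \subset L [set y] ->
  L [set y] :&: L (U (L [set c y] :|: val C)) = val C.
Proof.
move=> hC; apply/eqP; rewrite eqEsubset; apply/andP; split; last first.
  rewrite subsetI hC /=; apply: subset_trans (subLU _); exact: subsetUr.
apply/subsetP => t ht; rewrite -closedQ inL; apply/forall_inP => b hb.
have hCb : val C \subset L [set b].
  apply/subsetP => w hw; rewrite inL1.
  by move: hb; rewrite inU => /forall_inP; apply.
have : t \in L [set b] :&: L [set y].
  rewrite -step1; move: ht; rewrite !in_setI => /andP[-> /=].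
  apply/subsetP: t; apply: LS; apply: US; apply: setUS.
  by rewrite subsetI hCb hC.
by rewrite in_setI inL1 => /andP[].
Qed.

Lemma F1fQ y (C : Q) : leQ C (fQ y) -> mtQ (fQ y) (jnQ (cpQ (fQ y)) C) = C.
Proof.
move=> hC; apply: val_inj; rewrite val_mt cpQ_f /=.
exact: step2.
Qed.

Lemma densQ (A : Q) : A != zQ -> exists x, [/\ leQ (fQ x) A, fQ x != zQ & x \in val A].
Proof.
move=> nA.
have [x [hx nx]] : exists x, x \in val A /\ x != z.
  case/boolP: [exists x in val A, x != z] => [/exists_inP[x hx nx]|nE]; first by exists x.
  exfalso; move/negP: nA; apply; apply/eqP; apply: Q_leA (Q_zle A).
  apply/subsetP => x hx; case: (eqVneq x z) => [->|nx].
    by rewrite /= inL; apply/forall_inP => m _; apply: zle.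
  by exfalso; move/negP: nE; apply; apply/exists_inP; exists x.
exists x; split => //.
- by apply/subsetP => y; rewrite val_f inL1 => hy; apply: down hy hx.
- apply/eqP => e; move/eqP: nx; apply.
  have : x \in val (fQ x) by rewrite val_f inL1 leRR.
  rewrite e /= inL => /forall_inP h; apply: leA (zle x).
  by apply: h; rewrite in_setT.
Qed.

Lemma fQ_le x y : leQ (fQ x) (fQ y) = le x y.
Proof.
apply/idP/idP => [/subsetP h|h].
  by have := h x; rewrite !val_f !inL1 leRR; apply.
by apply/subsetP => w; rewrite !val_f !inL1 => hw; apply: leTr hw h.
Qed.
Lemma fQ_inj : injective fQ.
Proof.
move=> x y e; apply: leA; rewrite -fQ_le e; exact: Q_leRR.
Qed.
Lemma fQ_z : fQ z = zQ.
Proof.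
apply: val_inj; apply/setP => w; rewrite /= inL1 inL.
apply/idP/forall_inP => [h m _|h]; first by apply: leTr h (zle m).
by apply: h; rewrite in_setT.
Qed.
Lemma fQ_o : fQ o = oQ.
Proof.
apply: val_inj; apply/setP => w; rewrite /= inL1 inL leo.
by apply/esym/forall_inP => m; rewrite inE.
Qed.

Lemma inLbQ (M : {set Q}) (W : Q) : (W \in Lb [set: Q] leQ M) = [forall m in M, leQ W m].
Proof. by rewrite inE in_setT. Qed.
Lemma inUbQ (M : {set Q}) (W : Q) : (W \in Ub [set: Q] leQ M) = [forall m in M, leQ m W].
Proof. by rewrite inE in_setT. Qed.

Lemma fQ_le_A (A : Q) a : a \in val A -> leQ (fQ a) A.
Proof. by move=> ha; apply/subsetP => y; rewrite val_f inL1 => hy; apply: down hy ha. Qed.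

Lemma Q_sup (A : Q) : is_sup [set: Q] leQ (Lb [set: Q] leQ [set A] :&: (fQ @: setT)) A.
Proof.
split.
  rewrite inUbQ; apply/forall_inP => m; rewrite in_setI inLbQ => /andP[/forall_inP hm _].
  by apply: hm; rewrite inE.
move=> W; rewrite inUbQ => /forall_inP hW; apply/subsetP => a ha.
have : leQ (fQ a) W.
  apply: hW; rewrite in_setI imset_f ?in_setT // andbT inLbQ.
  by apply/forall_inP => m; rewrite inE => /eqP ->; apply: fQ_le_A.
by move/subsetP; apply; rewrite val_f inL1 leRR.
Qed.

Lemma Q_inf (A : Q) : is_inf [set: Q] leQ (Ub [set: Q] leQ [set A] :&: (fQ @: setT)) A.
Proof.
split.
  rewrite inLbQ; apply/forall_inP => m; rewrite in_setI inUbQ => /andP[/forall_inP hm _].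
  by apply: hm; rewrite inE.
move=> W; rewrite inLbQ => /forall_inP hW; apply/subsetP => u hu.
rewrite -closedQ inL; apply/forall_inP => b hb.
have : leQ W (fQ b).
  apply: hW; rewrite in_setI imset_f ?in_setT // andbT inUbQ.
  apply/forall_inP => m; rewrite inE => /eqP ->.
  apply/subsetP => a ha; rewrite val_f inL1.
  by move: hb; rewrite inU => /forall_inP; apply.
by move/subsetP => /(_ u hu); rewrite val_f inL1.
Qed.

Lemma partaDM :
     exists (Q : finType) (leQ : rel Q) (cQ : Q -> Q) (zQ oQ : Q)
            (X : {set Q}) (f : P -> Q),
       [/\ orthomodular_lattice [set: Q] leQ cQ zQ oQ,
           cc_doubly_dense [set: Q] leQ cQ zQ oQ X,
           (injective f /\ f @: [set: P] = X),
           (forall x y, leQ (f x) (f y) = le x y) &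
           (forall x, f (c x) = cQ (f x))].
Proof.
exists Q, leQ, cpQ, zQ, oQ, (fQ @: setT), fQ; split.
- apply: (OML_of Q_leRR Q_leA Q_leTr Q_mtl Q_mtr Q_mtg Q_jnl Q_jnr Q_jng Q_zle Q_leo Q_cpA Q_cpK Q_cpz).
  move=> A nA; have [x [h1 h2 _]] := densQ nA.
  exists (fQ x); split => //.
    by move=> C hC; apply: F1fQ.
  by rewrite cpQ_f => C hC; apply: F1fQ.
- split.
  + exact: subsetT.
  + by move=> A _; split; [exact: Q_sup | exact: Q_inf].
  + by move=> _ /imsetP[x _ ->]; rewrite cpQ_f imset_f ?in_setT.
  + by rewrite -fQ_z -fQ_o !imset_f ?in_setT.
- by split => //; exact: fQ_inj.
- exact: fQ_le.
- by move=> x; rewrite cpQ_f.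
Qed.
End DMS.

Lemma fa2 (T : finType) (p : pred T) a b : [forall m in [set a; b], p m] = p a && p b.
Proof.
apply/forall_inP/andP => [h|[h1 h2] m].
  by split; apply: h; rewrite !inE eqxx ?orbT.
by rewrite !inE => /orP[]/eqP->.
Qed.
Lemma faU1 (T : finType) (p : pred T) (A : {set T}) b :
  [forall m in A :|: [set b], p m] = [forall m in A, p m] && p b.
Proof.
apply/forall_inP/andP => [h|[/forall_inP h1 h2] m].
  by split; [apply/forall_inP => m hm|]; apply: h; rewrite !inE ?hm ?eqxx ?orbT.
by rewrite !inE => /orP[/h1|/eqP->].
Qed.
Lemma fa1 (T : finType) (p : pred T) b : [forall m in [set b], p m] = p b.
Proof. apply/forall_inP/idP => [h|h m]; first by apply: h; rewrite inE. by rewrite inE => /eqP->. Qed.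

Theorem partb (Q : finType) (leQ : rel Q) (cQ : Q -> Q) (zQ oQ : Q) (X : {set Q}) :
  orthomodular_lattice [set: Q] leQ cQ zQ oQ ->
  cc_doubly_dense [set: Q] leQ cQ zQ oQ X ->
  pseudo_orthomodular X leQ cQ zQ oQ.
Proof.
case=> [[hR hA hT [_ [_ hb]] [_ hcA hcK hL hU]] hlat hom] [hXs hden hcX [hzX hoX]].
have R x : leQ x x by apply: hR; rewrite in_setT.
have A x y : leQ x y -> leQ y x -> x = y by apply: hA; rewrite in_setT.
have Tr x y w : leQ x y -> leQ y w -> leQ x w by apply: hT; rewrite in_setT.
have zl x : leQ zQ x by case/andP: (hb x (in_setT x)).
have lo x : leQ x oQ by case/andP: (hb x (in_setT x)).
have cA x y : leQ x y -> leQ (cQ y) (cQ x) by apply: hcA; rewrite in_setT.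
have cK x : cQ (cQ x) = x by apply: hcK; rewrite in_setT.
have sup2 a b j : is_sup [set: Q] leQ [set a; b] j <->
    [/\ leQ a j, leQ b j & forall u, leQ a u -> leQ b u -> leQ j u].
  rewrite /is_sup inE in_setT fa2 /=; split => [[/andP[h1 h2] h3]|[h1 h2 h3]].
    by split => // u h4 h5; apply: h3; rewrite inE in_setT fa2 h4 h5.
  by split; [rewrite h1 h2|move=> u; rewrite inE in_setT fa2 /= => /andP[]; apply: h3].
have inf2 a b j : is_inf [set: Q] leQ [set a; b] j <->
    [/\ leQ j a, leQ j b & forall u, leQ u a -> leQ u b -> leQ u j].
  rewrite /is_inf inE in_setT fa2 /=; split => [[/andP[h1 h2] h3]|[h1 h2 h3]].
    by split => // u h4 h5; apply: h3; rewrite inE in_setT fa2 h4 h5.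
  by split; [rewrite h1 h2|move=> u; rewrite inE in_setT fa2 /= => /andP[]; apply: h3].
have supU M a b : is_sup [set: Q] leQ M a -> is_sup [set: Q] leQ M b -> a = b.
  by move=> [h1 h2] [h3 h4]; apply: (A); [apply: h2|apply: h4].
have infU M a b : is_inf [set: Q] leQ M a -> is_inf [set: Q] leQ M b -> a = b.
  by move=> [h1 h2] [h3 h4]; apply: (A); [apply: h4|apply: h2].
have dm1 a b k : is_sup [set: Q] leQ [set a; b] k -> is_inf [set: Q] leQ [set cQ a; cQ b] (cQ k).
  move/sup2 => [h1 h2 h3]; apply/inf2; split; [exact: cA|exact: cA|] => u hu1 hu2.
  rewrite -(cK u); apply: (cA); apply: h3.
    by rewrite -(cK a); apply: (cA).
  by rewrite -(cK b); apply: (cA).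
have dm2 a b k : is_inf [set: Q] leQ [set a; b] k -> is_sup [set: Q] leQ [set cQ a; cQ b] (cQ k).
  move/inf2 => [h1 h2 h3]; apply/sup2; split; [exact: cA|exact: cA|] => u hu1 hu2.
  rewrite -(cK u); apply: (cA); apply: h3.
    by rewrite -(cK a); apply: (cA).
  by rewrite -(cK b); apply: (cA).
have omd m y w v : leQ m y -> is_sup [set: Q] leQ [set m; cQ y] w ->
    is_inf [set: Q] leQ [set w; y] v -> v = m.
  move=> hmy hw hv.
  have hj : is_sup [set: Q] leQ [set cQ m; cQ y] (cQ m).
    by apply/sup2; split => //; apply: (cA).
  have [_ [m2 hm2]] := hlat (cQ m) (cQ (cQ y)) (in_setT _) (in_setT _).
  have [[k hk] _] := hlat m2 (cQ y) (in_setT _) (in_setT _).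
  have e := hom (cQ m) (cQ y) (in_setT _) (in_setT _) _ _ _ hj hm2 hk.
  have h1 := dm2 _ _ _ hm2; rewrite !cK in h1.
  have ew := supU _ _ _ h1 hw; subst w.
  have h2 := dm1 _ _ _ hk; rewrite cK -e cK in h2.
  exact: infU hv h2.
split.
  split.
  - by move=> x _; apply: (R).
  - by move=> x y _ _; apply: (A).
  - by move=> x y w _ _ _; apply: (Tr).
  - by split => //; split => // x _; rewrite zl lo.
  - split => //.
    + by move=> x y _ _; apply: (cA).
    + move=> x hx; apply/setP => w; move/setP: (hL x (in_setT x)) => /(_ w).
      rewrite !inE fa2 /= => e; rewrite -e; case hw: (w \in X) => //=.
      by rewrite e; apply/esym/eqP => wz; rewrite wz hzX in hw.
    + move=> x hx; apply/setP => w; move/setP: (hU x (in_setT x)) => /(_ w).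
      rewrite !inE fa2 /= => e; rewrite -e; case hw: (w \in X) => //=.
      by rewrite e; apply/esym/eqP => wz; rewrite wz hoX in hw.
move=> x y hx hy.
have [_ [m /inf2[hm1 hm2 hm3]]] := hlat x y (in_setT _) (in_setT _).
have [[w hw] _] := hlat m (cQ y) (in_setT _) (in_setT _).
have [_ [v hv]] := hlat w y (in_setT _) (in_setT _).
have evm := omd m y w v hm2 hw hv; subst v.
case/sup2: hw => [hw1 hw2 hw3].
case/inf2: hv => [hv1 hv2 hv3].
have eL t : (t \in Lb X leQ [set x; y]) = (t \in X) && leQ t m.
  rewrite inE fa2; case: (t \in X) => //=; apply/andP/idP => [[]|h]; first exact: hm3.
  by split; apply: (Tr) h _.
have eU u : (u \in Ub X leQ (Lb X leQ [set x; y] :|: [set cQ y])) = (u \in X) && leQ w u.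
  rewrite inE faU1; case hu: (u \in X) => //=.
  apply/andP/idP => [[/forall_inP h1 h2]|h]; last first.
    split => //; last by apply: (Tr) h.
    by apply/forall_inP => t; rewrite eL => /andP[_ ht]; apply: (Tr) ht (Tr _ _ _ hw1 h).
  apply: (hw3) => //.
  have [[_ hs] _] := hden m (in_setT m); apply: hs.
  rewrite inE in_setT; apply/forall_inP => t; rewrite in_setI inE in_setT fa1 => /andP[ht1 ht2].
  by apply: h1; rewrite eL ht2.
apply/setP => t; rewrite eL inE faU1; case ht: (t \in X) => //=.
apply/andP/idP => [[/forall_inP h1 h2]|h]; last first.
  split; last by apply: (Tr) h hm2.
  by apply/forall_inP => u; rewrite eU => /andP[_ hu]; apply: (Tr) h (Tr _ _ _ hv1 hu).
apply: (hv3) => //.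
have [_ [_ hs]] := hden w (in_setT w); apply: hs.
rewrite inE in_setT; apply/forall_inP => u; rewrite in_setI inE in_setT fa1 => /andP[hu1 hu2].
by apply: h1; rewrite eU hu2.
Qed.

Theorem theorem8 :
  (* (a) representation *)
  (forall (P : finType) (le : rel P) (c : P -> P) (z o : P),
     pseudo_orthomodular [set: P] le c z o ->
     exists (Q : finType) (leQ : rel Q) (cQ : Q -> Q) (zQ oQ : Q)
            (X : {set Q}) (f : P -> Q),
       [/\ orthomodular_lattice [set: Q] leQ cQ zQ oQ,
           cc_doubly_dense [set: Q] leQ cQ zQ oQ X,
           (injective f /\ f @: [set: P] = X),
           (forall x y, leQ (f x) (f y) = le x y) &
           (forall x, f (c x) = cQ (f x))]) /\
  (* (b) induced structure on X is a pseudo-orthomodular poset *)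
  (forall (Q : finType) (leQ : rel Q) (cQ : Q -> Q) (zQ oQ : Q) (X : {set Q}),
     orthomodular_lattice [set: Q] leQ cQ zQ oQ ->
     cc_doubly_dense [set: Q] leQ cQ zQ oQ X ->
     pseudo_orthomodular X leQ cQ zQ oQ).
Proof.
split.
  by move=> P le c z o H; apply: partaDM H.
exact: partb.
Qed.
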